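(* Let $1\le k\le n-1$ and let $\lambda$ be a Young diagram fitting inside the $k\times(n-k)$ rectangle. Then $$X_\lambda\,\mathbf 1=w_\lambda(\mathbf 1)+\sum_{\varepsilon\in E}f_\varepsilon\,\varepsilon$$ for some rational functions $f_\varepsilon\in\mathbb Q(v)$ each of which has a zero of order $\ge1$ at $v=0$.
   Context: Let $\mathcal H$ be the Hecke algebra of $S_n$ over $\mathbb Q(v)$, generated by $T_1,\dots,T_{n-1}$ with braid relations and $(T_i-v)(T_i+v^{-1})=0$. Let $E$ be the set of sequences of $n$ signs $\pm$ with exactly $k$ pluses; $S_n$ acts on $E$ by permuting positions ($s_i$ swaps entries $i,i+1$). Let $M=\bigoplus_{\varepsilon\in E}\mathbb Q(v)\varepsilon$ with $\mathcal H$-action: $T_i\varepsilon=s_i\varepsilon$ if $(\varepsilon_i,\varepsilon_{i+1})=(+,-)$; $T_i\varepsilon=-v^{-1}\varepsilon$ if $(\varepsilon_i,\varepsilon_{i+1})\in\{(+,+),(-,-)\}$; $T_i\varepsilon=s_i\varepsilon+(v-v^{-1})\varepsilon$ if $(\varepsilon_i,\varepsilon_{i+1})=(-,+)$. Let $\mathbf 1=(+^k,-^{n-k})$. For a Young diagram $\lambda$ with rows $\lambda_1\ge\dots\ge\lambda_\ell>0$ ($\ell\le k$, $\lambda_1\le n-k$) and boxes $(i,j)$, $1\le j\le\lambda_i$: $w_\lambda=P_\ell\cdots P_1\in S_n$ with $P_i=s_{k+\lambda_i-i}s_{k+\lambda_i-i-1}\cdots s_{k+1-i}$; $r_{ij}=\max(r_{i,j+1},r_{i+1,j})+1$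 with $r_{ij}=0$ for $(i,j)\notin\lambda$; $[r]=(v^r-v^{-r})/(v-v^{-1})$; $X_\lambda=Q_\ell\cdots Q_1$ with $Q_i=\prod_{j=\lambda_i}^{1}\bigl(T_{k+j-i}-v^{r_{ij}}/[r_{ij}]\bigr)$, factors ordered from $j=\lambda_i$ (leftmost) to $j=1$ (rightmost). *)

(* Defs.v *)
From HB Require Import structures.
From mathcomp Require Import all_boot all_order all_algebra fraction.
Set Implicit Arguments. Unset Strict Implicit. Unset Printing Implicit Defensive.
Import Order.TTheory GRing.Theory Num.Theory.
Local Open Scope ring_scope.

Notation Qv := {fraction {poly rat}}.
Definition v : Qv := tofrac 'X.

Definition vanishes_at0 (f : Qv) : Prop :=
  exists p q : {poly rat}, q.[0] != 0 /\ p.[0] = 0 /\ f = tofrac p / tofrac q.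

(* Sign sequences of length n: true = '+', false = '-'.  Positions are
   1-indexed in the paper; position p corresponds to the ordinal p-1. *)
Notation signs n := {ffun 'I_n -> bool}.

Definition E (n k : nat) : {set signs n} := [set e : signs n | #|[set i | e i]| == k].

Definition sgn n (e : signs n) (p : nat) : bool :=
  [exists j : 'I_n, (val j == p.-1) && e j].

(* s_i swaps the entries at (1-indexed) positions i and i+1 *)
Definition swapnat (i j : nat) : nat :=
  if j == i.-1 then i else if j == i then i.-1 else j.
Definition sact n (i : nat) (e : signs n) : signs n :=
  [ffun j : 'I_n => e (insubd j (swapnat i j))].

(* the module M, with basis the sign sequences (coefficients on non-E
   sequences are forced to be zero in the statement) *)
Notation M n := {ffun signs n -> Qv^o}.
Definition delta n (e : signs n) : M n := [ffun x => (x == e)%:R].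

Definition Tbasis n (i : nat) (e : signs n) : M n :=
  if sgn e i && ~~ sgn e i.+1 then delta (sact i e)
  else if sgn e i == sgn e i.+1 then (- v^-1) *: delta e
  else delta (sact i e) + (v - v^-1) *: delta e.

Definition Tact n (i : nat) (x : M n) : M n :=
  \sum_(e : signs n) x e *: Tbasis i e.

Definition onesq n k : signs n := [ffun j : 'I_n => (val j < k)%N].

(* Young diagram as the list of its row lengths lam = [lam_1; ...; lam_l] *)
Definition young (n k : nat) (lam : seq nat) : bool :=
  [&& sorted geq lam, all (fun x => 0 < x)%N lam, (size lam <= k)%N
    & all (fun x => x <= n - k)%N lam].

(* box (i,j), 1-indexed *)
Definition inbox (lam : seq nat) (i j : nat) : bool :=
  [&& (1 <= i)%N, (i <= size lam)%N, (1 <= j)%N & (j <= nth 0 lam i.-1)%N].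

(* r_{ij} = max(r_{i,j+1}, r_{i+1,j}) + 1 on boxes, 0 off boxes;
   computed with fuel (any path of boxes has length <= |lam|) *)
Fixpoint rfuel (lam : seq nat) (fuel i j : nat) : nat :=
  match fuel with
  | 0 => 0
  | f.+1 => if inbox lam i j then (maxn (rfuel lam f i j.+1) (rfuel lam f i.+1 j)).+1
            else 0
  end.
Definition rbox (lam : seq nat) (i j : nat) : nat := rfuel lam (sumn lam).+1 i j.

Definition qint (r : nat) : Qv := (v ^+ r - v ^- r) / (v - v^-1).

Definition cst (lam : seq nat) (i j : nat) : Qv :=
  v ^+ rbox lam i j / qint (rbox lam i j).

(* Q_i applied to x: factors j = 1 (rightmost, applied first) ... lam_i *)
Definition Qact n k (lam : seq nat) (i : nat) (x : M n) : M n :=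
  foldl (fun y j => Tact (k + j - i) y - cst lam i j *: y) x (iota 1 (nth 0 lam i.-1)).

Definition Xact n k (lam : seq nat) (x : M n) : M n :=
  foldl (fun y i => Qact k lam i y) x (iota 1 (size lam)).

Definition Pact n k (lam : seq nat) (i : nat) (e : signs n) : signs n :=
  foldl (fun y j => sact (k + j - i) y) e (iota 1 (nth 0 lam i.-1)).

Definition wact n k (lam : seq nat) (e : signs n) : signs n :=
  foldl (fun y i => Pact k lam i y) e (iota 1 (size lam)).

(* Main.v *)
Require Import Defs.
From HB Require Import structures.
From mathcomp Require Import all_boot all_order all_algebra fraction.
From mathcomp Require Import ring zify.
Import GRing.Theory.
Local Open Scope ring_scope.

Module P1.
Set Implicit Arguments. Unset Strict Implicit. Unset Printing Implicit Defensive.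

Definition inR (h : Qv) : Prop :=
  exists p q : {poly rat}, q.[0] != 0 /\ h = tofrac p / tofrac q.

Lemma tofrac_neq0 (q : {poly rat}) : q.[0] != 0 -> tofrac q != 0.
Proof. move=> hq; rewrite tofrac_eq0; apply: contraNneq hq => ->; by rewrite horner0. Qed.

Lemma inR_poly (p : {poly rat}) : inR (tofrac p).
Proof. exists p, 1; split; first by rewrite hornerC oner_eq0. by rewrite tofrac1 divr1. Qed.

Lemma inR0 : inR 0. Proof. by have := inR_poly 0; rewrite tofrac0. Qed.

Lemma inRD a b : inR a -> inR b -> inR (a + b).
Proof.
move=> [p [q [hq ->]]] [p' [q' [hq' ->]]].
exists (p * q' + p' * q), (q * q'); split.
  by rewrite hornerM mulf_neq0.
have h1 := tofrac_neq0 hq; have h2 := tofrac_neq0 hq'.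
rewrite (addf_div _ _ h1 h2) tofracD !tofracM; reflexivity.
Qed.

Lemma inRM a b : inR a -> inR b -> inR (a * b).
Proof.
move=> [p [q [hq ->]]] [p' [q' [hq' ->]]].
exists (p * p'), (q * q'); split.
  by rewrite hornerM mulf_neq0.
by rewrite !tofracM mulf_div.
Qed.

Lemma inRN a : inR a -> inR (- a).
Proof. move=> [p [q [hq ->]]]; exists (- p), q; split => //. by rewrite tofracN mulNr. Qed.

Definition Ok (m : nat) (f : Qv) : Prop := exists h, inR h /\ f = v ^+ m * h.

Lemma Ok0 m : Ok m 0. Proof. by exists 0; split; [exact: inR0| rewrite mulr0]. Qed.

Lemma OkD m a b : Ok m a -> Ok m b -> Ok m (a + b).
Proof. move=> [h [hh ->]] [h' [hh' ->]]; exists (h + h'); split; [exact: inRD| by rewrite mulrDr]. Qed.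

Lemma OkN m a : Ok m a -> Ok m (- a).
Proof. move=> [h [hh ->]]; exists (- h); split; [exact: inRN| by rewrite mulrN]. Qed.

Lemma OkB m a b : Ok m a -> Ok m b -> Ok m (a - b).
Proof. by move=> ha hb; apply: OkD => //; apply: OkN. Qed.

Lemma OkW m m' a : (m' <= m)%N -> Ok m a -> Ok m' a.
Proof.
move=> le [h [hh ->]]; exists (v ^+ (m - m') * h); split.
  by apply: inRM => //; rewrite /v -tofracXn; apply: inR_poly.
by rewrite mulrA -exprD subnKC.
Qed.

Lemma OkM m m' a b : Ok m a -> Ok m' b -> Ok (m + m') (a * b).
Proof.
move=> [h [hh ->]] [h' [hh' ->]]; exists (h * h'); split; first exact: inRM.
by rewrite exprD mulrACA.
Qed.

Lemma v_neq0 : v != 0.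
Proof. by rewrite /v tofrac_eq0 polyX_eq0. Qed.

Lemma OkV m a : Ok m.+1 a -> Ok m (v^-1 * a).
Proof.
move=> [h [hh ->]]; exists h; split => //.
by rewrite exprS mulrA mulrA mulVf ?v_neq0 // mul1r.
Qed.

Lemma Okv m a : Ok m a -> Ok m.+1 (v * a).
Proof. move=> [h [hh ->]]; exists h; split => //; by rewrite exprS mulrA. Qed.

Lemma Ok_vanish a : Ok 1 a -> vanishes_at0 a.
Proof.
move=> [h [[p [q [hq ->]]] ->]]; exists ('X * p), q; split => //; split.
  by rewrite mulrC hornerMX mulr0.
by rewrite tofracM expr1 /v mulrA.
Qed.

Lemma h01 m : (0 < m)%N -> (1 - 'X^m : {poly rat}).[0] != 0.
Proof. move=> hm; rewrite hornerD hornerN hornerXn hornerC expr0n eqn0Ngt hm. exact: isT. Qed.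

Lemma cst_gen (F : fieldType) (x y : F) : x != 0 -> y != 0 -> 1 - y ^+ 2 != 0 -> 1 - x ^+ 2 != 0 ->
  y / ((y - y^-1) / (x - x^-1)) = (y * y / x) * ((1 - x ^+ 2) / (1 - y ^+ 2)).
Proof.
move=> hx hy h1 h2.
have h1' : y * y - 1 != 0 by rewrite -expr2 -oppr_eq0 opprB.
have h2' : x * x - 1 != 0 by rewrite -expr2 -oppr_eq0 opprB.
field; by rewrite h1 hx hy h1' h2'.
Qed.

Lemma Ok_cst r : (0 < r)%N -> Ok (2 * r - 1) (v ^+ r / qint r).
Proof.
case: r => // r _.
have hp : (0 < 2 * r.+1)%N by rewrite muln_gt0.
exists (tofrac (1 - 'X^2) / tofrac (1 - 'X^(2 * r.+1))); split.
  exists (1 - 'X^2), (1 - 'X^(2 * r.+1)); split; [exact: h01|reflexivity].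
have hv := v_neq0.
have hq := tofrac_neq0 (h01 hp).
rewrite /qint !tofracB tofrac1 !tofracXn -/v in hq *.
have e1 : (2 * r.+1 = r.+1 + r.+1)%N by rewrite mul2n addnn.
have e2 : v ^+ (2 * r.+1 - 1) = v ^+ r.+1 * v ^+ r.+1 / v.
  by rewrite -exprD -e1 -(expr1 v) -expfB ?expr1 // mul2n -addnn addnS.
have hq2 : 1 - v ^+ 2 != 0.
  have := tofrac_neq0 (h01 (isT : (0 < 2)%N)).
  by rewrite !tofracB tofrac1 !tofracXn.
rewrite e2; rewrite e1 exprD -expr2 in hq.
rewrite e1 exprD -expr2.
apply: cst_gen; [exact: v_neq0 | exact: (expf_neq0 _ v_neq0) | exact: hq | exact: hq2].
Qed.

End P1.
Import P1.

Module P4.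
Set Implicit Arguments. Unset Strict Implicit. Unset Printing Implicit Defensive.

Section Vec.
Variable n : nat.
Implicit Types (e g x : signs n) (z y : M n).

Lemma deltaE e x : delta e x = (x == e)%:R.
Proof. by rewrite ffunE. Qed.

Lemma scale_deltaE (a : Qv) e x : (a *: delta e) x = if x == e then a else 0.
Proof. rewrite !ffunE; case: eqP => _; [exact: mulr1 | exact: mulr0]. Qed.

Lemma vec_decomp z : z = \sum_e z e *: delta e.
Proof.
apply/ffunP => x; rewrite sum_ffunE (bigD1 x) //= scale_deltaE eqxx big1 ?addr0 //.
by move=> e /negbTE ne; rewrite scale_deltaE eq_sym ne.
Qed.

Lemma Tact_delta i g : Tact i (delta g) = Tbasis i g.
Proof.
rewrite /Tact (bigD1 g) //= deltaE eqxx scale1r big1 ?addr0 //.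
by move=> e /negbTE ne; rewrite deltaE ne scale0r.
Qed.

Lemma TactD i y z : Tact i (y + z) = Tact i y + Tact i z.
Proof. rewrite /Tact -big_split /=; apply: eq_bigr => e _; by rewrite ffunE scalerDl. Qed.

Lemma step_decomp i (c : Qv) z :
  Tact i z - c *: z = \sum_e z e *: (Tbasis i e - c *: delta e).
Proof.
rewrite {2}(vec_decomp z) scaler_sumr /Tact -sumrB; apply: eq_bigr => e _.
by rewrite scalerBr scalerA mulrC -scalerA.
Qed.

Definition Good (P : signs n -> Qv -> Prop) z := forall e, P e (z e).

Section GoodP.
Variable P : signs n -> Qv -> Prop.
Hypothesis P0 : forall e, P e 0.
Hypothesis PD : forall e a b, P e a -> P e b -> P e (a + b).

Lemma Good0 : Good P 0. Proof. by move=> e; rewrite ffunE; apply: P0. Qed.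
Lemma GoodD y z : Good P y -> Good P z -> Good P (y + z).
Proof. by move=> hy hz e; rewrite ffunE; apply: PD. Qed.
Lemma Good_sum (F : signs n -> M n) : (forall e, Good P (F e)) -> Good P (\sum_e F e).
Proof. move=> h; apply: (big_ind (Good P)); [exact: Good0|exact: GoodD|move=> e _; exact: h]. Qed.
Lemma Good_delta (a : Qv) e : P e a -> Good P (a *: delta e).
Proof. move=> h x; rewrite scale_deltaE; case: eqP => [->|_] //. Qed.
End GoodP.

Lemma sgnE e (j : 'I_n) : sgn e j.+1 = e j.
Proof.
rewrite /sgn; apply/existsP/idP => [[j' /andP[/eqP h hj]]|hj].
  by have <- : j' = j by apply: val_inj.
by exists j; rewrite eqxx.
Qed.

Lemma sact_ord p e (j : 'I_n) : (0 < p < n)%N ->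
  sact p e j = if j.+1 == p then sgn e p.+1 else if j.+1 == p.+1 then sgn e p else e j.
Proof.
case/andP=> p0 pn; rewrite ffunE /swapnat.
case: eqP => [h1|h1].
  have -> : (j.+1 == p) by apply/eqP; lia.
  have -> : insubd j p = Ordinal pn by apply: val_inj; rewrite insubdK.
  by rewrite -(sgnE e (Ordinal pn)).
have -> : (j.+1 == p) = false by apply/eqP; lia.
case: eqP => [h2|h2].
  have -> : (j.+1 == p.+1) by apply/eqP; lia.
  have hp : (p.-1 < n)%N by lia.
  have -> : insubd j p.-1 = Ordinal hp by apply: val_inj; rewrite insubdK.
  rewrite -(sgnE e (Ordinal hp)) /=; congr sgn; lia.
have -> : (j.+1 == p.+1) = false by apply/eqP; lia.
have -> : insubd j j = j by apply: val_inj; apply: insubdK; exact: ltn_ord.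
by [].
Qed.

End Vec.

End P4.
Import P4.

Module P5.
Set Implicit Arguments. Unset Strict Implicit. Unset Printing Implicit Defensive.

Fixpoint Kw (ps : seq nat) (q : nat) : nat :=
  match ps with
  | [::] => 0%N
  | p :: ps' => if (q == p) || (q == p.+1) then (maxn (Kw ps' p) (Kw ps' p.+1)).+1
                else Kw ps' q
  end.

Section Split.
Variable n : nat.
Variables a b : 'I_n.
Hypothesis ab : a != b.

Lemma split2 (F : 'I_n -> nat) :
  (\sum_j F j = F a + F b + \sum_(j | (j != a) && (j != b)) F j)%N.
Proof.
rewrite (bigD1 a) //= (bigD1 b) /=; last by rewrite eq_sym.
by rewrite addnA.
Qed.
End Split.

Section Step.
Variables n k : nat.
Variable a : 'I_n.
Hypothesis hb : (a.+1 < n)%N.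
Let b : 'I_n := Ordinal hb.
Let p := a.+1.
Implicit Types (e g : signs n) (ps : seq nat).

Lemma ab : a != b.
Proof. apply/eqP => h; have := congr1 val h => /=; lia. Qed.

Lemma p_range : (0 < p < n)%N. Proof. rewrite /p; lia. Qed.

Lemma sact_a e : sact p e a = e b.
Proof. rewrite sact_ord ?p_range // eqxx. exact: (sgnE e b). Qed.
Lemma sact_b e : sact p e b = e a.
Proof.
rewrite sact_ord ?p_range //= /p.
have -> : (a.+2 == a.+1) = false by apply/eqP; lia.
rewrite eqxx; exact: (sgnE e a).
Qed.
Lemma sact_o e (j : 'I_n) : j != a -> j != b -> sact p e j = e j.
Proof.
move=> ja jb; rewrite sact_ord ?p_range // /p.
have -> : (j.+1 == a.+1) = false.
  by apply/eqP => h; move/eqP: ja; apply; apply: val_inj => /=; lia.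
have -> : (j.+1 == a.+2) = false.
  by apply/eqP => h; move/eqP: jb; apply; apply: val_inj => /=; lia.
by [].
Qed.

Lemma sgn_pa e : sgn e p = e a. Proof. exact: sgnE. Qed.
Lemma sgn_pb e : sgn e p.+1 = e b. Proof. exact: (sgnE e b). Qed.

Definition cnt e := (\sum_j (e j : nat))%N.

Lemma cnt_card e : #|[set i | e i]| = cnt e.
Proof.
rewrite /cnt -sum1_card big_mkcond /=; apply: eq_bigr => j _.
by rewrite inE; case: (e j).
Qed.

Lemma cnt_split e : cnt e = (e a + e b + \sum_(j | (j != a) && (j != b)) (e j : nat))%N.
Proof. exact: (split2 ab). Qed.

Lemma cnt_sact e : cnt (sact p e) = cnt e.
Proof.
rewrite !cnt_split sact_a sact_b.
have -> : (\sum_(j | (j != a) && (j != b)) (sact p e j : nat) =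
           \sum_(j | (j != a) && (j != b)) (e j : nat))%N.
  by apply: eq_bigr => j /andP[ja jb]; rewrite sact_o.
by rewrite [(e b + e a)%N]addnC.
Qed.

Lemma sact_E e : e \in E n k -> sact p e \in E n k.
Proof. by rewrite !inE !cnt_card cnt_sact. Qed.

Lemma diff_exists e g : e \in E n k -> g \in E n k -> (e a + e b != g a + g b)%N ->
  exists j : 'I_n, [/\ j != a, j != b & e j != g j].
Proof.
move=> he hg hne.
case: (boolP [exists j : 'I_n, [&& j != a, j != b & e j != g j]]).
  by case/existsP => j /and3P[h1 h2 h3]; exists j.
rewrite negb_exists => /forallP hall.
have hs : (\sum_(j | (j != a) && (j != b)) (e j : nat) =
           \sum_(j | (j != a) && (j != b)) (g j : nat))%N.
  apply: eq_bigr => j /andP[ja jb]; have := hall j; rewrite ja jb /=.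
  by move/negPn/eqP => ->.
move: he hg hne; rewrite !inE !cnt_card !cnt_split hs.
set S := (\sum_(j | _) _)%N.
by case: (e a); case: (e b); case: (g a); case: (g b) => /= /eqP h1 /eqP h2; lia.
Qed.

Definition W ps (j : 'I_n) := (2 * Kw ps j.+1 + 1)%N.
Definition Hm ps g e := (\sum_j W ps j * (e j != g j))%N.
Definition Rest ps g e := (\sum_(j | (j != a) && (j != b)) W ps j * (e j != g j))%N.

Lemma Hm_split ps g e :
  Hm ps g e = (W ps a * (e a != g a) + W ps b * (e b != g b) + Rest ps g e)%N.
Proof. exact: (split2 ab). Qed.

Lemma Rest_cons ps g e : Rest (p :: ps) g e = Rest ps g e.
Proof.
apply: eq_bigr => j /andP[ja jb]; rewrite /W /=.
have -> : (j.+1 == p) = false.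
  by apply/eqP => h; move/eqP: ja; apply; apply: val_inj => /=; rewrite /p in h; lia.
have -> : (j.+1 == p.+1) = false.
  by apply/eqP => h; move/eqP: jb; apply; apply: val_inj => /=; rewrite /p in h; lia.
by [].
Qed.

Lemma Rest_sg ps g e : Rest ps (sact p g) e = Rest ps g e.
Proof. by apply: eq_bigr => j /andP[ja jb]; rewrite sact_o. Qed.
Lemma Rest_se ps g e : Rest ps g (sact p e) = Rest ps g e.
Proof. by apply: eq_bigr => j /andP[ja jb]; rewrite sact_o. Qed.
Lemma Rest_gg ps g : Rest ps g g = 0%N.
Proof. by rewrite /Rest big1 // => j _; rewrite eqxx muln0. Qed.

Lemma W_cons_a ps : W (p :: ps) a = (2 * (maxn (Kw ps p) (Kw ps p.+1)).+1 + 1)%N.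
Proof. by rewrite /W /= eqxx. Qed.
Lemma W_cons_b ps : W (p :: ps) b = (2 * (maxn (Kw ps p) (Kw ps p.+1)).+1 + 1)%N.
Proof. by rewrite /W /= /p eqxx orbT. Qed.
Lemma W_a ps : W ps a = (2 * Kw ps p + 1)%N. Proof. by []. Qed.
Lemma W_b ps : W ps b = (2 * Kw ps p.+1 + 1)%N. Proof. by []. Qed.

Lemma Rest_pos ps g e : e \in E n k -> g \in E n k -> (e a + e b != g a + g b)%N ->
  (1 <= Rest ps g e)%N.
Proof.
move=> he hg hne; have [j [ja jb ej]] := diff_exists he hg hne.
rewrite /Rest (bigD1 j) /=; last by rewrite ja jb.
by rewrite ej muln1 /W; lia.
Qed.

End Step.

End P5.
Import P5.

Module P6.
Set Implicit Arguments. Unset Strict Implicit. Unset Printing Implicit Defensive.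

Lemma OkVc x m f c : Ok x.+1 f -> Ok m c -> Ok x (f * (- v^-1 - c)).
Proof.
move=> hf hc; rewrite mulrBr mulrN mulrC.
apply: OkB; first by apply: OkN; apply: OkV.
by apply: (OkW _ (OkM hf hc)); lia.
Qed.

Lemma OkVc2 x m f c : Ok x.+1 f -> Ok m c -> Ok x (f * (v - v^-1 - c)).
Proof.
move=> hf hc; rewrite mulrBr mulrBr [f * v]mulrC [f * v^-1]mulrC.
apply: OkB; last by apply: (OkW _ (OkM hf hc)); lia.
apply: OkB; last by apply: OkV.
by apply: (OkW _ (Okv hf)); lia.
Qed.

Section J.
Variables n k : nat.
Implicit Types (e g : signs n) (ps : seq nat).

Definition J ps g e (f : Qv) :=
  [/\ Ok 1 f, Ok (Hm ps g e %/ 2) f & (e \in E n k \/ f = 0)].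

Lemma J0 ps g e : J ps g e 0.
Proof. by split; [exact: Ok0|exact: Ok0|right]. Qed.

Lemma JD ps g e a b : J ps g e a -> J ps g e b -> J ps g e (a + b).
Proof.
case=> h1 h2 h3 [h1' h2' h3']; split; try exact: OkD.
case: h3 => [he|->]; first by left.
case: h3' => [he|->]; first by left.
by right; rewrite addr0.
Qed.

Lemma GoodJ2 ps g e1 e2 x y : J ps g e1 x -> J ps g e2 y ->
  Good (J ps g) (x *: delta e1 + y *: delta e2).
Proof.
move=> h1 h2; apply: (GoodD (@JD ps g)); exact: (Good_delta (@J0 ps g)).
Qed.

Variable a : 'I_n.
Hypothesis hb : (a.+1 < n)%N.
Local Notation b := (Ordinal hb).
Local Notation p := a.+1.

Lemma Jg ps g c m : g a -> ~~ g b -> g \in E n k -> Ok m c ->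
  (Kw ps p + Kw ps p.+1 + 1 <= m)%N -> J ps (sact p g) g (- c).
Proof.
move=> ga gb gE hc hm; split.
- by apply: OkN; apply: (OkW _ hc); lia.
- apply: OkN; apply: (OkW _ hc).
  rewrite (Hm_split hb) (Rest_sg hb) Rest_gg (sact_a hb) (sact_b hb) W_a (W_b hb) ga.
  move/negbTE: gb => ->; rewrite /=; lia.
- by left.
Qed.

Lemma Jterm ps g e f c m : g a -> ~~ g b -> g \in E n k -> Ok m c ->
  (Kw ps p + Kw ps p.+1 + 1 <= m)%N -> J (p :: ps) g e f ->
  Good (J ps (sact p g)) (f *: (Tbasis p e - c *: delta e)).
Proof.
move=> ga gb gE hc hm [hf1 hf2 hf3].
move/negbTE: gb => gb.
have H0 := (Hm_split hb (p :: ps) g e).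
rewrite (Rest_cons hb) W_cons_a (W_cons_b hb) ga gb in H0.
set R := Rest hb ps g e in H0.
set K1 := Kw ps p in H0 hm *; set K2 := Kw ps p.+1 in H0 hm *.
have Hs : forall e', Hm ps (sact p g) e' =
   (W ps a * (e' a != g b) + W ps b * (e' b != g a) + Rest hb ps g e')%N.
  by move=> e'; rewrite (Hm_split hb) (Rest_sg hb) (sact_a hb) (sact_b hb).
rewrite W_a (W_b hb) -/K1 -/K2 ga gb in Hs.
rewrite /Tbasis (sgnE e a) (sgnE e (Ordinal hb)).
case Hea: (e a); case Heb: (e b); rewrite /= ?Hea ?Heb in H0 *.
-
  rewrite -scalerBl scalerA; apply: (Good_delta (@J0 _ _)).
  case: hf3 => [he|f0]; last by rewrite f0 mul0r; exact: J0.
  have hR : (1 <= R)%N by apply: (@Rest_pos n k a hb ps g e) => //; rewrite Hea Heb ga gb.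
  split.
  + by apply: (OkVc _ hc); apply: (OkW _ hf2); rewrite H0; lia.
  + apply: (OkVc _ hc); apply: (OkW _ hf2); rewrite H0 Hs Hea Heb -/R /=; lia.
  + by left.
-
  rewrite scalerBr scalerA -scaleNr; apply: GoodJ2.
  + split => //.
    * apply: (OkW _ hf2); rewrite Hs (sact_a hb) (sact_b hb) Heb Hea (Rest_se hb) -/R H0 /=; lia.
    * by case: hf3 => [he|->]; [left; exact: sact_E|right].
  + split.
    * by apply: OkN; apply: (OkW _ (OkM hf1 hc)); lia.
    * apply: OkN; apply: (OkW _ (OkM hf2 hc)); rewrite Hs Hea Heb -/R H0 /=; lia.
    * by case: hf3 => [he|->]; [left|right; rewrite mul0r oppr0].
-
  rewrite -addrA -scalerBl scalerDr scalerA; apply: GoodJ2.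
  + split => //.
    * apply: (OkW _ hf2); rewrite Hs (sact_a hb) (sact_b hb) Heb Hea (Rest_se hb) -/R H0 /=; lia.
    * by case: hf3 => [he|->]; [left; exact: sact_E|right].
  + case: hf3 => [he|f0]; last by rewrite f0 mul0r; exact: J0.
    split.
    * by apply: (OkVc2 _ hc); apply: (OkW _ hf2); rewrite H0; lia.
    * apply: (OkVc2 _ hc); apply: (OkW _ hf2); rewrite H0 Hs Hea Heb -/R /=; lia.
    * by left.
-
  rewrite -scalerBl scalerA; apply: (Good_delta (@J0 _ _)).
  case: hf3 => [he|f0]; last by rewrite f0 mul0r; exact: J0.
  have hR : (1 <= R)%N by apply: (@Rest_pos n k a hb ps g e) => //; rewrite Hea Heb ga gb.
  split.
  + by apply: (OkVc _ hc); apply: (OkW _ hf2); rewrite H0; lia.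
  + apply: (OkVc _ hc); apply: (OkW _ hf2); rewrite H0 Hs Hea Heb -/R /=; lia.
  + by left.
Qed.

End J.

End P6.
Import P6.

Module P7.
Set Implicit Arguments. Unset Strict Implicit. Unset Printing Implicit Defensive.

Section Fold.
Variables n k : nat.
Implicit Types (e g : signs n) (ps : seq nat) (z y : M n).

Definition stepf (y : M n) (pc : nat * Qv) : M n := Tact pc.1 y - pc.2 *: y.
Definition gstepf (g : signs n) (pc : nat * Qv) : signs n := sact pc.1 g.

Fixpoint valid g (st : seq (nat * Qv)) : Prop :=
  match st with
  | [::] => True
  | pc :: st' => [/\ (0 < pc.1 < n)%N, sgn g pc.1, ~~ sgn g pc.1.+1,
      (exists2 m, Ok m pc.2 & (Kw (map fst st') pc.1 + Kw (map fst st') pc.1.+1 + 1 <= m)%N)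
      & valid (sact pc.1 g) st']
  end.

Lemma one_step ps g z p c m : g \in E n k -> (0 < p < n)%N -> sgn g p -> ~~ sgn g p.+1 ->
  Ok m c -> (Kw ps p + Kw ps p.+1 + 1 <= m)%N -> Good (J k (p :: ps) g) z ->
  exists z', stepf (delta g + z) (p, c) = delta (sact p g) + z' /\ Good (J k ps (sact p g)) z'.
Proof.
case: p => [|a'] // gE hb0 ga gb hc hm hz.
have hb : (a'.+1 < n)%N by case/andP: hb0.
pose a : 'I_n := Ordinal (ltnW hb).
have ga' : g a by rewrite -(sgnE g a).
have gb' : ~~ g (Ordinal hb) by rewrite -(sgnE g (Ordinal hb)).
exists ((- c) *: delta g + \sum_e z e *: (Tbasis a'.+1 e - c *: delta e)); split.
  rewrite /stepf /= TactD Tact_delta -step_decomp scaleNr.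
  have -> : Tbasis a'.+1 g = delta (sact a'.+1 g) by rewrite /Tbasis ga gb.
  by rewrite scalerDr opprD addrACA -addrA.
apply: (GoodD (@JD n k ps _)).
  apply: (Good_delta (@J0 n k ps _)).
  exact: (@Jg n k a hb ps g c m).
apply: (Good_sum (@J0 n k ps _) (@JD n k ps _)) => e.
exact: (@Jterm n k a hb ps g e (z e) c m).
Qed.

Theorem fold_main (st : seq (nat * Qv)) : forall g z, g \in E n k -> valid g st ->
  Good (J k (map fst st) g) z ->
  exists z', foldl stepf (delta g + z) st = delta (foldl gstepf g st) + z' /\
             Good (J k [::] (foldl gstepf g st)) z'.
Proof.
elim: st => [|[p c] st IH] g z gE.
  by move=> _ hz; exists z.
case=> /= hp h1 h2 [m hc hm] hv hz.
have [z1 [e1 hz1]] := one_step gE hp h1 h2 hc hm hz.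
rewrite e1.
apply: IH => //.
case/andP: hp => p0 pn.
case: p p0 pn h1 h2 {hm e1 hz1 hv hz} => // a' _ pn _ _.
exact: (@sact_E n k (Ordinal (ltnW pn)) pn).
Qed.

Lemma final_form gT z : Good (J k [::] gT) z ->
  (forall e, e \in E n k -> vanishes_at0 (z e)) /\ z = \sum_(e in E n k) z e *: delta e.
Proof.
move=> hz; split.
  by move=> e _; case: (hz e) => h1 _ _; exact: Ok_vanish.
rewrite {1}(vec_decomp z) (bigID (fun e => e \in E n k)) /=.
rewrite [X in _ + X]big1 ?addr0; first reflexivity.
move=> e he; case: (hz e) => _ _ [h|->]; first by rewrite h in he.
exact: scale0r.
Qed.

End Fold.

End P7.
Import P7.

Module P8.
Set Implicit Arguments. Unset Strict Implicit. Unset Printing Implicit Defensive.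

Section Comb.
Variables n k : nat.
Variable lam : seq nat.
Hypothesis hk1 : (1 <= k)%N.
Hypothesis hkn : (k <= n - 1)%N.
Hypothesis hy : young n k lam.

Definition lm r := nth 0%N lam r.-1.

Lemma Fsz : (size lam <= k)%N.
Proof. by case/and4P: hy. Qed.

Lemma Fsort r s : (1 <= r)%N -> (r <= s)%N -> (s <= size lam)%N -> (lm s <= lm r)%N.
Proof.
move=> r1 rs ss; case/and4P: hy => hs _ _ _.
have tr : transitive geq by move=> y x z h1 h2; exact: leq_trans h2 h1.
have := @sorted_leq_nth nat geq tr leqnn 0%N lam hs r.-1 s.-1.
rewrite /lm !inE; apply; lia.
Qed.

Lemma Fle r : (1 <= r <= size lam)%N -> (lm r <= n - k)%N.
Proof.
move=> hr; case/and4P: hy => _ _ _ /all_nthP; apply; lia.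
Qed.

Lemma Fpos r : (1 <= r <= size lam)%N -> (0 < lm r)%N.
Proof.
move=> hr; case/and4P: hy => _ /all_nthP h _ _; apply: h; lia.
Qed.

Definition posf (i j r : nat) : nat :=
  (k + 1 - r + (if r < i then lm r else if r == i then j.-1 else 0))%N.

Definition Gs (i j : nat) : signs n :=
  [ffun q : 'I_n => has (fun r => q.+1 == posf i j r) (iota 1 k)].

Lemma GsE i j (q : 'I_n) : Gs i j q = has (fun r => q.+1 == posf i j r) (iota 1 k).
Proof. by rewrite ffunE. Qed.

Lemma sgnG i j q : (0 < q <= n)%N -> sgn (Gs i j) q = has (fun r => q == posf i j r) (iota 1 k).
Proof.
case: q => // q /= hq.
by rewrite -[q.+1]/(nat_of_ord (Ordinal hq)).+1 sgnE GsE.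
Qed.

Section Box.
Variables i j : nat.
Hypothesis hi : (1 <= i <= size lam)%N.
Hypothesis hj : (1 <= j <= lm i)%N.
Let p := (k + j - i)%N.

Lemma hsort r : (1 <= r)%N -> (r < i)%N -> (lm i <= lm r)%N.
Proof. move=> r1 ri; apply: Fsort; lia. Qed.

Lemma box_range : (0 < p < n)%N.
Proof. have := Fle hi; have := Fsz; rewrite /p; lia. Qed.

Lemma box_sgn1 : sgn (Gs i j) p.
Proof.
have := box_range; have := Fsz => hs hr.
rewrite sgnG; last by lia.
apply/hasP; exists i; first by rewrite mem_iota; lia.
by rewrite /posf ltnn eqxx; apply/eqP; rewrite /p; lia.
Qed.

Lemma box_sgn2 : ~~ sgn (Gs i j) p.+1.
Proof.
have := box_range; have := Fle hi; have := Fsz => hs hl hr.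
rewrite sgnG; last by rewrite /p in hr *; lia.
apply/hasP => -[r]; rewrite mem_iota => hr1 /eqP; rewrite /posf /p.
case: ltngtP => hri.
- have := hsort (_ : (1 <= r)%N) hri; lia.
- lia.
- lia.
Qed.

Lemma box_step : sact p (Gs i j) = Gs i j.+1.
Proof.
have := box_range; have := Fle hi; have := Fsz => hs hl hr.
apply/ffunP => q; rewrite sact_ord // [in RHS]GsE.
have hp1 := box_sgn1; have hp2 := box_sgn2.
case: eqP => hq1.
  rewrite (negbTE hp2); apply/esym/negP => /hasP [r]; rewrite mem_iota => hr1 /eqP.
  rewrite /posf hq1 /p.
  case: ltngtP => hri.
  - have := hsort (_ : (1 <= r)%N) hri; lia.
  - lia.
  - lia.
case: eqP => hq2.
  rewrite hp1; apply/esym/hasP; exists i; first by rewrite mem_iota; lia.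
  by rewrite /posf ltnn eqxx hq2 /p; apply/eqP; lia.
rewrite GsE; apply: eq_in_has => r _ /=; rewrite /posf.
case: ltngtP => hri //.
apply/eqP/eqP; lia.
Qed.

End Box.

Lemma Gs_row i : (1 <= i <= size lam)%N -> Gs i (lm i).+1 = Gs i.+1 1.
Proof.
move=> hi; apply/ffunP => q; rewrite !GsE; apply: eq_in_has => r _ /=; rewrite /posf.
case: (ltngtP r i) => hri.
- by rewrite (ltn_trans hri (ltnSn i)).
- have -> : (r < i.+1)%N = false by apply/negbTE; rewrite -leqNgt.
  by case: (r == i.+1).
- by rewrite hri ltnSn; case: eqP.
Qed.

Lemma Gs_start : Gs 1 1 = onesq n k.
Proof.
apply/ffunP => q; rewrite GsE ffunE.
change (has (fun r => q.+1 == posf 1 1 r) (iota 1 k) = (nat_of_ord q < k)%N).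
apply/hasP/idP => [[r]|hq].
  rewrite mem_iota /posf => hr /eqP; case: (ltngtP r 1) => hr1; [by case: r hr hr1| lia| lia].
exists (k - q)%N; first by rewrite mem_iota; lia.
rewrite /posf.
have -> : (k - q < 1)%N = false by apply/negbTE; lia.
by case: (k - q == 1)%N; apply/eqP; lia.
Qed.

End Comb.

End P8.
Import P8.

Module P9.
Set Implicit Arguments. Unset Strict Implicit. Unset Printing Implicit Defensive.

Section R.
Variables n k : nat.
Variable lam : seq nat.
Hypothesis hk1 : (1 <= k)%N.
Hypothesis hkn : (k <= n - 1)%N.
Hypothesis hy : young n k lam.

Local Notation lm := (lm lam).

Lemma inboxE i j : inbox lam i j = (1 <= i <= size lam)%N && (1 <= j <= lm i)%N.
Proof. by rewrite /inbox /lm; case: (1 <= i)%N; case: (i <= size lam)%N. Qed.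

Definition meas i j := (size lam - i + (lm 1 - j) + 1)%N.

Lemma sumn_ge_size (l : seq nat) : all (fun x => 0 < x)%N l -> (size l <= sumn l)%N.
Proof. elim: l => //= x l IH /andP[hx hl]; have := IH hl; lia. Qed.

Lemma meas_le i j : inbox lam i j -> (meas i j <= sumn lam)%N.
Proof.
rewrite inboxE => /andP[hi hj].
have h1 : (lm i <= lm 1)%N by apply: (Fsort hk1 hkn hy); lia.
case/and4P: hy => _ hpos _ _.
move: hi hj h1; rewrite /meas /lm.
case: lam hpos => [|x l] /=; first by lia.
move=> /andP[hx hl]; have := sumn_ge_size hl; lia.
Qed.

Lemma rfuel_stable f : forall i j f', (inbox lam i j -> (meas i j <= f)%N) -> (f <= f')%N ->
  rfuel lam f' i j = rfuel lam f i j.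
Proof.
elim: f => [|f IH] i j f' hm hf.
  have hb : inbox lam i j = false.
    by apply/negbTE/negP => /hm; rewrite /meas; lia.
  by case: f' hf => [|f'] _ //=; rewrite hb.
case: f' hf => [|f'] // hf /=.
case hb: (inbox lam i j) => //.
have := hm hb; move: hb; rewrite inboxE => /andP[hi hj] hmij.
have h1 : (lm i <= lm 1)%N by apply: (Fsort hk1 hkn hy); lia.
rewrite (IH i j.+1 f') ?(IH i.+1 j f') //.
- move=> hb2; move: hb2 hmij; rewrite inboxE /meas => /andP[hi2 hj2]; lia.
- move=> hb2; move: hb2 hmij; rewrite inboxE /meas => /andP[hi2 hj2]; lia.
Qed.

Lemma rbox_rec i j : inbox lam i j ->
  rbox lam i j = (maxn (rbox lam i j.+1) (rbox lam i.+1 j)).+1.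
Proof.
move=> hb.
have e : rbox lam i j = (maxn (rfuel lam (sumn lam) i j.+1) (rfuel lam (sumn lam) i.+1 j)).+1.
  by rewrite /rbox /= hb.
have st1 : forall i' j', rfuel lam (sumn lam).+1 i' j' = rfuel lam (sumn lam) i' j'.
  move=> i' j'; apply: rfuel_stable => //; exact: meas_le.
by rewrite e -!st1.
Qed.

Lemma rbox_pos i j : inbox lam i j -> (0 < rbox lam i j)%N.
Proof. by move/rbox_rec => ->. Qed.

Lemma rbox_mono d : forall i j i' j', inbox lam i j -> inbox lam i' j' ->
  (i <= i')%N -> (j <= j')%N -> (i' - i + (j' - j))%N = d ->
  (rbox lam i' j' + d <= rbox lam i j)%N.
Proof.
elim: d => [|d IH] i j i' j' hb hb' hii hjj hd.
  have -> : i' = i by lia.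
  have -> : j' = j by lia.
  by rewrite addn0.
have hr := rbox_rec hb.
move: (hb) (hb'); rewrite !inboxE => /andP[hi hj] /andP[hi' hj'].
have hs : (lm i' <= lm i)%N by apply: (Fsort hk1 hkn hy); lia.
case: (ltnP j j') => hjj'.
  have hb2 : inbox lam i j.+1 by rewrite inboxE; apply/andP; split; lia.
  have := IH i j.+1 i' j' hb2 hb' hii hjj' (_ : _ = d); rewrite hr.
  by move=> h; have := h (ltac:(lia)); lia.
have hb2 : inbox lam i.+1 j.
  have hs2 : (lm i' <= lm i.+1)%N by apply: (Fsort hk1 hkn hy); lia.
  by rewrite inboxE; apply/andP; split; lia.
have := IH i.+1 j i' j' hb2 hb' (_ : _) hjj (_ : _ = d); rewrite hr.
by move=> h; have := h (ltac:(lia)) (ltac:(lia)); lia.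
Qed.

End R.

End P9.
Import P9.

Module P10.
Set Implicit Arguments. Unset Strict Implicit. Unset Printing Implicit Defensive.

Lemma eq_foldl (T R : Type) (f g : R -> T -> R) x s :
  (forall y a, f y a = g y a) -> foldl f x s = foldl g x s.
Proof. move=> h; elim: s x => //= a s IH x; by rewrite h IH. Qed.

Lemma foldl_flatten_map (T R I : Type) (f : R -> T -> R) x (g : I -> seq T) s :
  foldl f x (flatten (map g s)) = foldl (fun y i => foldl f y (g i)) x s.
Proof. elim: s x => //= a s IH x; by rewrite foldl_cat IH. Qed.

Lemma foldl_map' (T A R : Type) (f : R -> T -> R) x (h : A -> T) s :
  foldl f x (map h s) = foldl (fun y a => f y (h a)) x s.
Proof. elim: s x => //= a s IH x; by rewrite IH. Qed.

Section Lists.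
Variables n k : nat.
Variable lam : seq nat.
Hypothesis hk1 : (1 <= k)%N.
Hypothesis hkn : (k <= n - 1)%N.
Hypothesis hy : young n k lam.
Local Notation lm := (lm lam).

Definition row (i : nat) : seq (nat * nat) := [seq (i, j) | j <- iota 1 (lm i)].
Definition bsL m c := flatten [seq row i | i <- iota m c].
Definition pos (b : nat * nat) := (k + b.2 - b.1)%N.
Definition Fb (b : nat * nat) : nat * Qv := (pos b, cst lam b.1 b.2).
Definition rb (b : nat * nat) := rbox lam b.1 b.2.

Lemma mem_row i b : b \in row i -> b.1 = i /\ (1 <= b.2 <= lm i)%N.
Proof. by case/mapP => j; rewrite mem_iota => hj ->; split => //=; lia. Qed.

Lemma mem_bsL m c b : b \in bsL m c -> (m <= b.1 < m + c)%N /\ (1 <= b.2 <= lm b.1)%N.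
Proof.
case/flattenP => s /mapP [i]; rewrite mem_iota => hi -> /mem_row [h1 h2].
by rewrite h1; split.
Qed.

Definition lexlt (b b' : nat * nat) := (b.1 < b'.1)%N || ((b.1 == b'.1) && (b.2 < b'.2)%N).

Lemma pairwise_lex m c : pairwise lexlt (bsL m c).
Proof.
elim: c m => [|c IH] m; first by [].
rewrite /bsL /= pairwise_cat; apply/and3P; split.
- apply/allrelP => [[i j] [i' j']] /mem_row [/= h1 _] /mem_bsL [/= h2 _].
  rewrite /lexlt /= h1; apply/orP; left; lia.
- rewrite /row pairwise_map.
  have : pairwise ltn (iota 1 (lm m)).
    rewrite -sorted_pairwise; [exact: iota_ltn_sorted | exact: ltn_trans].
  apply: sub_pairwise => j j' /= hjj; by rewrite /lexlt /= ltnn eqxx hjj.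
- exact: IH.
Qed.

Definition touches (b : nat * nat) q := (q == pos b) || (q == (pos b).+1).
Definition Rn (b b' : nat * nat) :=
  (touches b' (pos b) || touches b' (pos b).+1) ==> (rb b' < rb b)%N.

Lemma inbox_bs b : b \in bsL 1 (size lam) -> inbox lam b.1 b.2.
Proof.
case/mem_bsL => h1 h2; rewrite inboxE; apply/andP; split => //; lia.
Qed.

Lemma geo b b' : inbox lam b.1 b.2 -> inbox lam b'.1 b'.2 -> lexlt b b' -> Rn b b'.
Proof.
case: b => i j; case: b' => i' j' /= hb hb' hl.
have hs : (size lam <= k)%N by case/and4P: hy.
move: (hb) (hb'); rewrite !inboxE => /andP[hi hj] /andP[hi' hj'].
apply/implyP; rewrite /touches /pos /= => hnear.
have hle : (i <= i')%N /\ (j <= j')%N.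
  move: hl hnear; rewrite /lexlt /=.
  case/orP => [h|/andP[/eqP h h']]; [|lia].
  by case/orP => [/orP[/eqP e|/eqP e]|/orP[/eqP e|/eqP e]]; lia.
case: hle => h1 h2.
have := rbox_mono hk1 hkn hy hb hb' h1 h2 (erefl _).
move: hl; rewrite /lexlt /rb /= => hl.
case/orP: hl => [h|/andP[/eqP e h]]; lia.
Qed.

Lemma pairwise_Rn : pairwise Rn (bsL 1 (size lam)).
Proof.
apply: (sub_in_pairwise (P := mem (bsL 1 (size lam)))) (pairwise_lex 1 (size lam)).
  by move=> b b' hb hb'; apply: geo; apply: inbox_bs.
by apply/allP.
Qed.

End Lists.

End P10.
Import P10.

Module P11.
Set Implicit Arguments. Unset Strict Implicit. Unset Printing Implicit Defensive.

Section Main.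
Variables n k : nat.
Variable lam : seq nat.
Hypothesis hk1 : (1 <= k)%N.
Hypothesis hkn : (k <= n - 1)%N.
Hypothesis hy : young n k lam.
Local Notation lm := (lm lam).
Local Notation pos := (pos k).
Local Notation rb := (rb lam).
Local Notation Rn := (Rn k lam).
Local Notation touches := (touches k).

Lemma Kw_bound (bs : seq (nat * nat)) : forall q B, pairwise Rn bs ->
  all (fun b => 0 < rb b)%N bs -> (forall b, b \in bs -> touches b q -> (rb b <= B)%N) ->
  (Kw (map pos bs) q <= B)%N.
Proof.
elim: bs => [|b bs IH] q B //=.
move=> /andP[hall hpw] /andP[hpos hposs] hB.
case: ifP => ht.
  have hb := hB b (mem_head _ _) ht.
  have h1 : (Kw (map pos bs) (pos b) <= (rb b).-1)%N.
    apply: IH => // b' hb' ht'; have := allP hall b' hb'.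
    rewrite /P10.Rn ht' /= => h; lia.
  have h2 : (Kw (map pos bs) (pos b).+1 <= (rb b).-1)%N.
    apply: IH => // b' hb' ht'; have := allP hall b' hb'.
    rewrite /P10.Rn ht' orbT /= => h; lia.
  lia.
apply: IH => // b' hb' ht'; apply: hB => //; by rewrite inE hb' orbT.
Qed.

Fixpoint valid' (g : signs n) (st : seq (nat * Qv)) : Prop :=
  match st with
  | [::] => True
  | pc :: st' => [/\ (0 < pc.1 < n)%N, sgn g pc.1, ~~ sgn g pc.1.+1 & valid' (sact pc.1 g) st']
  end.

Fixpoint KwOK (st : seq (nat * Qv)) : Prop :=
  match st with
  | [::] => True
  | pc :: st' => (exists2 m, Ok m pc.2 &
       (Kw (map fst st') pc.1 + Kw (map fst st') pc.1.+1 + 1 <= m)%N) /\ KwOK st'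
  end.

Lemma valid_of st : forall g, valid' g st -> KwOK st -> valid g st.
Proof.
elim: st => [|pc st IH] g //=.
by case=> h1 h2 h3 h4 [h5 h6]; split => //; apply: IH.
Qed.

Lemma valid'_cat s1 : forall g s2, valid' g s1 -> valid' (foldl (@gstepf n) g s1) s2 ->
  valid' g (s1 ++ s2).
Proof.
elim: s1 => [|pc s1 IH] g s2 //=.
by case=> h1 h2 h3 h4 h5; split => //; apply: IH.
Qed.

Lemma map_fst_Fb bs : map fst (map (Fb k lam) bs) = map pos bs.
Proof. by rewrite -map_comp. Qed.

Lemma KwOK_bs (bs : seq (nat * nat)) : pairwise Rn bs ->
  (forall b, b \in bs -> inbox lam b.1 b.2) -> KwOK (map (Fb k lam) bs).
Proof.
elim: bs => [|b bs IH] //= hpw hin.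
move: hpw => /andP[hall hpw].
have hbb := hin b (mem_head _ _).
have hr := rbox_pos hk1 hkn hy hbb.
have hposs : all (fun b => 0 < rb b)%N bs.
  by apply/allP => b' hb'; apply: (rbox_pos hk1 hkn hy); apply: hin; rewrite inE hb' orbT.
split; last by apply: IH => // b' hb'; apply: hin; rewrite inE hb' orbT.
exists (2 * rb b - 1)%N; first exact: Ok_cst.
rewrite map_fst_Fb.
have h1 : (Kw (map pos bs) (pos b) <= (rb b).-1)%N.
  apply: Kw_bound => // b' hb' ht'; have := allP hall b' hb'.
  rewrite /P10.Rn ht' /= => h; lia.
have h2 : (Kw (map pos bs) (pos b).+1 <= (rb b).-1)%N.
  apply: Kw_bound => // b' hb' ht'; have := allP hall b' hb'.
  rewrite /P10.Rn ht' orbT /= => h; lia.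
have hr' : (0 < rb b)%N := hr. lia.
Qed.

Lemma valid_row i : (1 <= i <= size lam)%N -> forall c j0, (1 <= j0)%N -> (j0 + c = (lm i).+1)%N ->
  valid' (Gs n k lam i j0) (map (Fb k lam) [seq (i, j) | j <- iota j0 c]) /\
  foldl (@gstepf n) (Gs n k lam i j0) (map (Fb k lam) [seq (i, j) | j <- iota j0 c]) = Gs n k lam i (j0 + c).
Proof.
move=> hi; elim=> [|c IH] j0 hj0 hc /=; first by rewrite addn0.
have hj : (1 <= j0 <= lm i)%N by lia.
have hst := box_step hk1 hkn hy hi hj.
have [h1 h2] := IH j0.+1 (ltac:(lia)) (ltac:(lia)).
rewrite /Fb /P10.pos /= in h1 h2 *.
rewrite /gstepf /= hst; split.
  split => //; [exact: (box_range hk1 hkn hy hi hj)|exact: (box_sgn1 hk1 hkn hy hi hj)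
               |exact: (box_sgn2 hk1 hkn hy hi hj)].
by rewrite h2 addSnnS.
Qed.

Lemma valid_rows c : forall m, (1 <= m)%N -> (m + c <= (size lam).+1)%N ->
  valid' (Gs n k lam m 1) (map (Fb k lam) (bsL lam m c)) /\
  foldl (@gstepf n) (Gs n k lam m 1) (map (Fb k lam) (bsL lam m c)) = Gs n k lam (m + c) 1.
Proof.
elim: c => [|c IH] m hm hc; first by rewrite addn0.
have hi : (1 <= m <= size lam)%N by lia.
rewrite /bsL /= map_cat.
have [r1 r2] := valid_row hi (isT : (0 < 1)%N) (add1n (lm m)).
rewrite -/(row lam m) in r1 r2.
rewrite Gs_row // in r2.
have [h1 h2] := IH m.+1 (ltac:(lia)) (ltac:(lia)).
split.
  apply: valid'_cat => //; by rewrite r2.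
by rewrite foldl_cat r2 -/(bsL lam m.+1 c) h2 addSnnS.
Qed.

End Main.

End P11.
Import P11.


Lemma map_flatten_map (A B C : Type) (h : B -> C) (g : A -> seq B) s :
  map h (flatten (map g s)) = flatten (map (fun i => map h (g i)) s).
Proof. elim: s => //= a s IH; by rewrite map_cat IH. Qed.

Lemma onesq_E n k : (k <= n)%N -> onesq n k \in E n k.
Proof.
move=> hk; rewrite inE cnt_card /cnt.
rewrite (eq_bigr (fun j : 'I_n => nat_of_bool (j < k)%N)); last by move=> j _; rewrite ffunE.
rewrite -(big_mkord xpredT (fun j => nat_of_bool (j < k)%N)).
rewrite (big_cat_nat (leq0n k) hk) /=.
rewrite (eq_big_nat _ _ (F2 := fun _ => 1%N)); last by move=> i /andP[_ ->].
rewrite [X in (_ + X)%N](eq_big_nat _ _ (F2 := fun _ => 0%N)); last first.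
  by move=> i /andP[hi _]; rewrite ltnNge hi.
by rewrite !sum_nat_const_nat muln1 muln0 addn0 subn0.
Qed.

Theorem mainTheorem4 (n k : nat) (lam : seq nat) :
  (1 <= k)%N -> (k <= n - 1)%N -> young n k lam ->
  exists f : signs n -> Qv,
    (forall e, e \in E n k -> vanishes_at0 (f e)) /\
    Xact k lam (delta (onesq n k)) =
      delta (wact k lam (onesq n k)) + \sum_(e in E n k) f e *: delta e.
Proof.
move=> hk1 hkn hy.
set st := map (Fb k lam) (bsL lam 1 (size lam)).
have eX : Xact k lam (delta (onesq n k)) = foldl (@stepf n) (delta (onesq n k) + 0) st.
  rewrite addr0 /st /bsL map_flatten_map foldl_flatten_map.
  apply: eq_foldl => y i; rewrite /row -map_comp foldl_map'; reflexivity.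
have eW : wact k lam (onesq n k) = foldl (@gstepf n) (onesq n k) st.
  rewrite /st /bsL map_flatten_map foldl_flatten_map.
  apply: eq_foldl => y i; rewrite /row -map_comp foldl_map'; reflexivity.
have hE : onesq n k \in E n k by apply: onesq_E; lia.
have hv : valid (onesq n k) st.
  apply: valid_of.
    have [h1 _] := valid_rows hk1 hkn hy (c := size lam) (isT : (0 < 1)%N) (leqnn _).
    by rewrite -(Gs_start hk1 hkn hy).
  apply: (KwOK_bs hk1 hkn hy); first exact: (pairwise_Rn hk1 hkn hy).
  move=> b hb; exact: inbox_bs.
have hz : Good (J k (map fst st) (onesq n k)) 0 by apply: Good0; exact: J0.
have [z [ez hz']] := fold_main hE hv hz.
have [hf ef] := final_form hz'.
exists (fun e => z e); split; first exact: hf.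
by rewrite eX ez eW -ef.
Qed.
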